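(* Let $V_\mathbb{C}$ be a complex vector space of dimension $d\ge7$ with a non-degenerate quadratic form $q$, and identify $\mathfrak{so}(V_\mathbb{C},q)$ with $\Lambda^2V_\mathbb{C}$. For $i=1,2$ let $L_i\subset V_\mathbb{C}$ be a 1-dimensional subspace and $0\ne u_i\in L_i^\perp$ with $q(u_i)=0$ and $\dim(L_i+\mathbb{C}u_i)=2$, and set $\mathfrak{r}(L_i,u_i)=u_i\wedge(L_i+\mathbb{C}u_i)^\perp$. If $\mathfrak{h}_\mathbb{C}\subset\mathfrak{so}(V_\mathbb{C},q)$ is a Lie subalgebra containing $\mathfrak{r}(L_1,u_1)$ and $\mathfrak{r}(L_2,u_2)$, then $u_1\wedge u_2\in\mathfrak{h}_\mathbb{C}$.
   Context: The identification $\Lambda^2V_\mathbb{C}\cong\mathfrak{so}(V_\mathbb{C},q)$ sends $v\wedge w$ to the endomorphism $x\mapsto q(x,w)v-q(x,v)w$; orthogonal complements are with respect to $q$. *)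

(* Defs.v *)
From HB Require Import structures.
From mathcomp Require Import all_boot all_order all_algebra all_field.
From mathcomp Require Import reals.
From mathcomp Require Import complex.
Set Implicit Arguments. Unset Strict Implicit. Unset Printing Implicit Defensive.
Import GRing.Theory.
Local Open Scope ring_scope.

Definition bform (R : realType) (d : nat) (Q : 'M[R[i]]_d) (x y : 'cV[R[i]]_d) : R[i] :=
  (x^T *m Q *m y) 0 0.

(* v /\ w  as the endomorphism  x |-> q(x,w) v - q(x,v) w  (for symmetric Q). *)
Definition wedge (R : realType) (d : nat) (Q : 'M[R[i]]_d) (v w : 'cV[R[i]]_d) : 'M[R[i]]_d :=
  v *m w^T *m Q - w *m v^T *m Q.

Definition in_so (R : realType) (d : nat) (Q : 'M[R[i]]_d) (A : 'M[R[i]]_d) : Prop :=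
  forall x y, bform Q (A *m x) y + bform Q x (A *m y) = 0.

Definition lie_subalg_so (R : realType) (d : nat) (Q : 'M[R[i]]_d)
    (h : {vspace 'M[R[i]]_d}) : Prop :=
  (forall A, A \in h -> in_so Q A) /\
  (forall A B, A \in h -> B \in h -> A *m B - B *m A \in h).

Definition r_sub (R : realType) (d : nat) (Q : 'M[R[i]]_d)
    (L : {vspace 'cV[R[i]]_d}) (u : 'cV[R[i]]_d) (h : {vspace 'M[R[i]]_d}) : Prop :=
  forall w, (forall x, x \in (L + <[u]>)%VS -> bform Q x w = 0) -> wedge Q u w \in h.

(* Main.v *)
Require Import Defs.
From HB Require Import structures.
From mathcomp Require Import all_boot all_order all_algebra all_field.
From mathcomp Require Import reals.
From mathcomp Require Import complex.
From mathcomp Require Import zify.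
Import GRing.Theory.
Local Open Scope ring_scope.

Lemma bformC (R : realType) (d : nat) (Q : 'M[R[i]]_d) x y :
  Q^T = Q -> bform Q x y = bform Q y x.
Proof.
move=> hQ; rewrite /bform.
have E (A : 'M[R[i]]_1) : A 0 0 = A^T 0 0 by rewrite mxE.
rewrite E.
by rewrite !trmx_mul trmxK hQ mulmxA.
Qed.

Arguments bformC {R d} Q x y.

Lemma bformDl (R : realType) (d : nat) (Q : 'M[R[i]]_d) x y z :
  bform Q (x + y) z = bform Q x z + bform Q y z.
Proof. by rewrite /bform linearD /= !mulmxDl mxE. Qed.

Lemma bformZl (R : realType) (d : nat) (Q : 'M[R[i]]_d) k x z :
  bform Q (k *: x) z = k * bform Q x z.
Proof. by rewrite /bform linearZ /= -!scalemxAl mxE. Qed.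

Lemma bformNl (R : realType) (d : nat) (Q : 'M[R[i]]_d) x z :
  bform Q (- x) z = - bform Q x z.
Proof. by rewrite -scaleN1r bformZl mulN1r. Qed.

Lemma bform_mx (R : realType) (d : nat) (Q : 'M[R[i]]_d) x y :
  x^T *m Q *m y = (bform Q x y)%:M.
Proof. by rewrite /bform {1}[x^T *m Q *m y]mx11_scalar. Qed.

Lemma mul4 (R : realType) (d : nat) (Q : 'M[R[i]]_d) (x y z t : 'cV[R[i]]_d) :
  x *m y^T *m Q *m (z *m t^T *m Q) = bform Q y z *: (x *m t^T *m Q).
Proof.
rewrite !mulmxA -[x *m y^T *m Q *m z]mulmxA -[x *m y^T *m (Q *m z)]mulmxA.
by rewrite [y^T *m (Q *m z)]mulmxA bform_mx mul_mx_scalar -!scalemxAl.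
Qed.

Lemma wedge_mul (R : realType) (d : nat) (Q : 'M[R[i]]_d) (a b c e : 'cV[R[i]]_d) :
  wedge Q a b *m wedge Q c e =
  bform Q b c *: (a *m e^T *m Q) - bform Q b e *: (a *m c^T *m Q)
  - (bform Q a c *: (b *m e^T *m Q) - bform Q a e *: (b *m c^T *m Q)).
Proof. by rewrite /wedge mulmxBl !mulmxBr !mul4. Qed.

Lemma zmod_id (V : zmodType) (A B C D : V) : -A - B - (-C - D) = -(A - C) - (B - D).
Proof. rewrite !opprD !opprK. rewrite -!addrA; congr (_ + _). rewrite addrC -!addrA; congr (_ + _). by rewrite addrC. Qed.

Lemma bracket_key (R : realType) (d : nat) (Q : 'M[R[i]]_d) (u1 u2 w1 w2 : 'cV[R[i]]_d) :
  Q^T = Q -> bform Q w1 u2 = 0 -> bform Q u1 w2 = 0 ->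
  wedge Q u1 w1 *m wedge Q u2 w2 - wedge Q u2 w2 *m wedge Q u1 w1 =
  - (bform Q w1 w2 *: wedge Q u1 u2) - bform Q u1 u2 *: wedge Q w1 w2.
Proof.
move=> hQ h1 h2; rewrite !wedge_mul.
rewrite (bformC _ w2 u1) // h2 (bformC _ w2 w1) // (bformC _ u2 w1) // h1 (bformC _ u2 u1) //.
rewrite /wedge !scale0r !subr0 !sub0r !scalerBr.
set A := bform Q w1 w2 *: _; set B := bform Q u1 u2 *: _.
set C := bform Q w1 w2 *: _; set D := bform Q u1 u2 *: _.
exact: zmod_id.
Qed.

Lemma perp2 (F : fieldType) (d k m : nat) (T : 'M[F]_(d,k)) (Y : 'M[F]_(m,d)) :
  Y *m (kermx T)^T = 0 -> (Y <= T^T)%MS.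
Proof.
move=> hY.
have h1 : (Y <= kermx (kermx T)^T)%MS by apply/sub_kermxP.
have h2 : (T^T <= kermx (kermx T)^T)%MS.
  by apply/sub_kermxP; rewrite -trmx_mul mulmx_ker trmx0.
have h3 : \rank (kermx (kermx T)^T) = \rank T^T.
  by rewrite mxrank_ker mxrank_tr mxrank_ker mxrank_tr subKn // rank_leq_row.
have h4 : (kermx (kermx T)^T <= T^T)%MS by rewrite -(mxrank_leqif_sup h2).2 h3 eqxx.
exact: submx_trans h1 h4.
Qed.

Lemma sc0 (F : fieldType) (n : nat) : (0 : F)%:M = 0 :> 'M[F]_n.
Proof. by apply/matrixP => i j; rewrite !mxE mul0rn. Qed.

Lemma sc11 (F : fieldType) (a : F) : (a%:M : 'M[F]_1) = 0 -> a = 0.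
Proof. by move/(congr1 (fun M : 'M[F]_1 => M 0 0)); rewrite !mxE eqxx mulr1n. Qed.

Lemma rowmx0P (F : fieldType) m n1 n2 (A : 'M[F]_(m,n1)) (B : 'M[F]_(m,n2)) :
  row_mx A B = 0 -> A = 0 /\ B = 0.
Proof. by move/eqP; rewrite row_mx_eq0 => /andP [/eqP -> /eqP ->]. Qed.

Lemma rowQ (R : realType) (d : nat) (Q : 'M[R[i]]_d) (x : 'rV[R[i]]_d) (v : 'cV[R[i]]_d) :
  x *m (Q *m v) = (bform Q x^T v)%:M.
Proof. by rewrite mulmxA -bform_mx trmxK. Qed.

Lemma rowQ0 (R : realType) (d : nat) (Q : 'M[R[i]]_d) (x : 'rV[R[i]]_d) (v : 'cV[R[i]]_d) :
  x *m (Q *m v) = 0 -> Q^T = Q -> bform Q v x^T = 0.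
Proof. by move=> + hQ; rewrite rowQ bformC //; apply: sc11. Qed.

Lemma trQ (R : realType) (d : nat) (Q : 'M[R[i]]_d) (a b : 'cV[R[i]]_d) :
  Q^T = Q -> (Q *m a)^T *m b = (bform Q a b)%:M.
Proof. by move=> hQ; rewrite trmx_mul hQ bform_mx. Qed.

Lemma rowE' (F : Type) m n (M : 'M[F]_(m,n)) i j : M i j = (row i M) 0 j.
Proof. by rewrite mxE. Qed.

Lemma trE' (F : Type) m n (M : 'M[F]_(m,n)) i j : M i j = (M^T) j i.
Proof. by rewrite mxE. Qed.

Lemma entryQ (R : realType) (d m n : nat) (Q : 'M[R[i]]_d) (X : 'M[R[i]]_(m,d))
  (Y : 'M[R[i]]_(n,d)) i j :
  (X *m Q *m Y^T) i j = bform Q (row i X)^T (row j Y)^T.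
Proof.
rewrite /bform trmxK rowE' !row_mul trE' trmx_mul trmxK rowE' row_mul.
by rewrite trE' trmx_mul trmxK.
Qed.

Lemma lmod_id (K : fieldType) (V : lmodType K) (q c : K) (W U : V) :
  (-(q *: W) - c *: U) + (-(q *: W) - c *: (- U)) = - ((q + q) *: W).
Proof. by rewrite scalerN opprK addrACA addNr addr0 -opprD -scalerDl. Qed.

Lemma nz_entry (F : fieldType) m n (M : 'M[F]_(m,n)) : M != 0 -> exists i j, M i j != 0.
Proof.
move=> hM; case: (pickP (fun ij : 'I_m * 'I_n => M ij.1 ij.2 != 0)) => [[i j] H|H].
  by exists i, j.
case/eqP: hM; apply/matrixP => i j; rewrite mxE.
by move: (H (i, j)) => /= /negbFE /eqP.
Qed.

Lemma line_of (K : fieldType) (vT : vectType K) (L : {vspace vT}) :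
  \dim L = 1%N -> exists l, L = <[l]>%VS.
Proof.
move=> hL; have nz : L != 0%VS by apply/negP => /eqP E; move: hL; rewrite E dimv0.
exists (vpick L); apply/eqP; rewrite eq_sym eqEdim -memvE memv_pick /=.
by rewrite hL dim_vline vpick0 nz.
Qed.

Arguments rowQ0 {R d Q x v}.
Arguments rowmx0P {F m n1 n2 A B}.

Lemma ker3 (R : realType) (d : nat) (Q : 'M[R[i]]_d) (a b c : 'cV[R[i]]_d) (x : 'rV[R[i]]_d) :
  Q^T = Q -> x *m row_mx (Q *m a) (row_mx (Q *m b) (Q *m c)) = 0 ->
  [/\ bform Q a x^T = 0, bform Q b x^T = 0 & bform Q c x^T = 0].
Proof.
move=> hQ; rewrite !mul_mx_row => /rowmx0P [A /rowmx0P [B C]].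
by split; apply: rowQ0.
Qed.

Lemma ker4 (R : realType) (d : nat) (Q : 'M[R[i]]_d) (a b c e : 'cV[R[i]]_d) (x : 'rV[R[i]]_d) :
  Q^T = Q -> x *m row_mx (row_mx (Q *m a) (Q *m b)) (row_mx (Q *m c) (Q *m e)) = 0 ->
  [/\ bform Q a x^T = 0, bform Q b x^T = 0, bform Q c x^T = 0 & bform Q e x^T = 0].
Proof.
move=> hQ; rewrite !mul_mx_row => /rowmx0P [/rowmx0P [A B] /rowmx0P [C D]].
by split; apply: rowQ0.
Qed.

Lemma pick3 (R : realType) (d : nat) (Q : 'M[R[i]]_d) (a1 b1 c1 a2 b2 c2 : 'cV[R[i]]_d) :
  Q^T = Q ->
  kermx (row_mx (Q *m a2) (row_mx (Q *m b2) (Q *m c2))) *m Q *m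
    (kermx (row_mx (Q *m a1) (row_mx (Q *m b1) (Q *m c1))))^T != 0 ->
  exists w1 w2, [/\ [/\ bform Q a1 w1 = 0, bform Q b1 w1 = 0 & bform Q c1 w1 = 0],
     [/\ bform Q a2 w2 = 0, bform Q b2 w2 = 0 & bform Q c2 w2 = 0] & bform Q w1 w2 != 0].
Proof.
move=> hQ /nz_entry [i [j]]; rewrite entryQ bformC // => hij.
exists (row j (kermx (row_mx (Q *m a1) (row_mx (Q *m b1) (Q *m c1)))))^T.
exists (row i (kermx (row_mx (Q *m a2) (row_mx (Q *m b2) (Q *m c2)))))^T.
split => //; apply: ker3 => //; by rewrite -row_mul mulmx_ker row0.
Qed.

Lemma pick4 (R : realType) (d : nat) (Q : 'M[R[i]]_d) (a b c e : 'cV[R[i]]_d) :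
  Q^T = Q ->
  kermx (row_mx (row_mx (Q *m a) (Q *m b)) (row_mx (Q *m c) (Q *m e))) *m Q *m
    (kermx (row_mx (row_mx (Q *m a) (Q *m b)) (row_mx (Q *m c) (Q *m e))))^T != 0 ->
  exists w1 w2, [/\ [/\ bform Q a w1 = 0, bform Q b w1 = 0, bform Q c w1 = 0 & bform Q e w1 = 0],
     [/\ bform Q a w2 = 0, bform Q b w2 = 0, bform Q c w2 = 0 & bform Q e w2 = 0] & bform Q w1 w2 != 0].
Proof.
move=> hQ /nz_entry [i [j]]; rewrite entryQ => hij.
exists (row i (kermx (row_mx (row_mx (Q *m a) (Q *m b)) (row_mx (Q *m c) (Q *m e)))))^T.
exists (row j (kermx (row_mx (row_mx (Q *m a) (Q *m b)) (row_mx (Q *m c) (Q *m e)))))^T.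
split => //; apply: ker4 => //; by rewrite -row_mul mulmx_ker row0.
Qed.

Arguments pick3 {R d Q a1 b1 c1 a2 b2 c2}.
Arguments pick4 {R d Q a b c e}.
Arguments line_of {K vT L}.
Arguments perp2 {F d k m T Y}.
Arguments nz_entry {F m n M}.
Arguments ker3 {R d Q a b c x}.
Arguments ker4 {R d Q a b c e x}.

Theorem lemma5p6 (R : realType) (d : nat) (Q : 'M[R[i]]_d)
  (hd : (7 <= d)%N) (hQsym : Q^T = Q) (hQnd : Q \in unitmx)
  (L1 L2 : {vspace 'cV[R[i]]_d}) (u1 u2 : 'cV[R[i]]_d)
  (hL1 : \dim L1 = 1%N) (hL2 : \dim L2 = 1%N)
  (hu1 : u1 != 0) (hu2 : u2 != 0)
  (hu1perp : forall l, l \in L1 -> bform Q l u1 = 0)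
  (hu2perp : forall l, l \in L2 -> bform Q l u2 = 0)
  (hu1iso : bform Q u1 u1 = 0) (hu2iso : bform Q u2 u2 = 0)
  (hdim1 : \dim (L1 + <[u1]>)%VS = 2%N) (hdim2 : \dim (L2 + <[u2]>)%VS = 2%N)
  (h : {vspace 'M[R[i]]_d}) (hh : lie_subalg_so Q h)
  (hr1 : r_sub Q L1 u1 h) (hr2 : r_sub Q L2 u2 h) :
  wedge Q u1 u2 \in h.
Proof.
have [l1 eL1] := line_of hL1.
have [l2 eL2] := line_of hL2.
have hl1u1 : bform Q l1 u1 = 0 by apply: hu1perp; rewrite eL1 memv_line.
have hl2u2 : bform Q l2 u2 = 0 by apply: hu2perp; rewrite eL2 memv_line.
have mem1 w : bform Q l1 w = 0 -> bform Q u1 w = 0 -> wedge Q u1 w \in h.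
  move=> a b; apply: hr1 => x /memv_addP [y hy [z hz ->]].
  rewrite eL1 in hy; case/vlineP: hy => k ->; case/vlineP: hz => k' ->.
  by rewrite bformDl !bformZl a b !mulr0 addr0.
have mem2 w : bform Q l2 w = 0 -> bform Q u2 w = 0 -> wedge Q u2 w \in h.
  move=> a b; apply: hr2 => x /memv_addP [y hy [z hz ->]].
  rewrite eL2 in hy; case/vlineP: hy => k ->; case/vlineP: hz => k' ->.
  by rewrite bformDl !bformZl a b !mulr0 addr0.
have brk A B : A \in h -> B \in h -> A *m B - B *m A \in h by apply: hh.2.
have rkQ m (X : 'M[R[i]]_(m, d)) : \rank (X *m Q) = \rank X.
  by rewrite mxrankMfree // row_free_unit.
have kerrow n (T : 'M[R[i]]_(d, n)) (r : 'I_d) (K : 'M_(d, d)) :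
    K = kermx T -> row r K *m T = 0.
  by move=> ->; rewrite -row_mul mulmx_ker row0.
set c := bform Q u1 u2.
have [hc|hc] := eqVneq c 0.
-
  set TA := row_mx (Q *m l1) (row_mx (Q *m u1) (Q *m u2)).
  set TB := row_mx (Q *m l2) (row_mx (Q *m u1) (Q *m u2)).
  have nz : kermx TB *m Q *m (kermx TA)^T != 0.
    apply/negP => /eqP H.
    have := mxrankS (perp2 H); rewrite rkQ mxrank_ker.
    have := rank_leq_row TA^T; have := rank_leq_col TB. move=> ra rb rc.
move: (leq_trans rc rb) => rd. clear -ra rd hd. lia.
  have [w1 [w2 [[a1 b1 c1] [a2 b2 c2] hij]]] := pick3 hQsym nz.
  have X := brk _ _ (mem1 _ a1 b1) (mem2 _ a2 c2).
  rewrite bracket_key // in X; last by rewrite bformC.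
  rewrite -/c hc scale0r subr0 in X.
  have -> : wedge Q u1 u2 = (- bform Q w1 w2)^-1 *: (- (bform Q w1 w2 *: wedge Q u1 u2)).
    by rewrite -scaleNr scalerA mulVf ?scale1r // oppr_eq0.
  exact: memvZ.
-
  set k1 := bform Q l1 u2 / c; set l1' := l1 - k1 *: u1.
  set k2 := bform Q l2 u1 / c; set l2' := l2 - k2 *: u2.
  have hcs : bform Q u2 u1 = c by rewrite bformC.
  have e11 : bform Q l1' u1 = 0 by rewrite bformDl bformNl bformZl hl1u1 hu1iso mulr0 subr0.
  have e12 : bform Q l1' u2 = 0.
    by rewrite bformDl bformNl bformZl -/c /k1 divfK // subrr.
  have e21 : bform Q l2' u1 = 0.
    by rewrite bformDl bformNl bformZl hcs /k2 divfK // subrr.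
  have e22 : bform Q l2' u2 = 0 by rewrite bformDl bformNl bformZl hl2u2 hu2iso mulr0 subr0.
  set T1 := row_mx (Q *m l1') (Q *m l2').
  set T2 := row_mx (Q *m u1) (Q *m u2).
  set T := row_mx T1 T2.
  have nz : kermx T *m Q *m (kermx T)^T != 0.
    apply/negP => /eqP H.
    have sub := perp2 H.
    have sub1 : (kermx T *m Q <= T1^T)%MS.
      apply/row_subP => r.
      have /submxP [v hv] := submx_trans (row_sub r _) sub.
      rewrite tr_row_mx -[v]hsubmxK mul_row_col in hv.
      have hx : row r (kermx T) *m T2 = 0.
        by have := kerrow _ T r _ erefl; rewrite mul_mx_row => /rowmx0P [].
      have : row r (kermx T *m Q) *m row_mx u1 u2 = 0.
        by rewrite row_mul -mulmxA mul_mx_row.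
      rewrite hv mulmxDl -!mulmxA /T1 /T2 !tr_row_mx !mul_col_row !trQ //.
      rewrite e11 e12 e21 e22 hu1iso hu2iso hcs -/c !sc0 block_mx0 mulmx0 add0r.
      rewrite -[rsubmx v]hsubmxK mul_row_block !mulmx0 add0r addr0 !mul_mx_scalar.
      move/rowmx0P => [/eqP]; rewrite scaler_eq0 (negbTE hc) /= => /eqP hb.
      move/eqP; rewrite scaler_eq0 (negbTE hc) /= => /eqP ha.
      by rewrite ha hb row_mx0 mul0mx addr0 submxMl.
    have := mxrankS sub1; rewrite rkQ mxrank_ker.
    have := rank_leq_row T1^T; have := rank_leq_col T. lia.
  have [w [w' [[a1' b1' c1 d1] [a2' b2' c2 d2] hij]]] := pick4 hQsym nz.
  have lift1 x : bform Q l1' x = 0 -> bform Q u1 x = 0 -> bform Q l1 x = 0.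
    move=> A B; have -> : l1 = l1' + k1 *: u1 by rewrite subrK.
    by rewrite bformDl bformZl A B mulr0 addr0.
  have lift2 x : bform Q l2' x = 0 -> bform Q u2 x = 0 -> bform Q l2 x = 0.
    move=> A B; have -> : l2 = l2' + k2 *: u2 by rewrite subrK.
    by rewrite bformDl bformZl A B mulr0 addr0.
  have a1 := lift1 _ a1' c1; have a2 := lift1 _ a2' c2.
  have b1 := lift2 _ b1' d1; have b2 := lift2 _ b2' d2.
  have X1 := brk _ _ (mem1 _ a1 c1) (mem2 _ b2 d2).
  have X2 := brk _ _ (mem1 _ a2 c2) (mem2 _ b1 d1).
  rewrite bracket_key // in X1; last by rewrite bformC.
  rewrite bracket_key // in X2; last by rewrite bformC.
  have X := memvD X1 X2.
  rewrite (bformC _ w' w) // -/c in X.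
  have E : wedge Q w' w = - wedge Q w w' by rewrite /wedge opprB.
  rewrite E in X.
  rewrite lmod_id in X.
  have hq : bform Q w w' + bform Q w w' != 0.
    by rewrite -mulr2n -mulr_natr mulf_neq0 // Num.Theory.pnatr_eq0.
  have -> : wedge Q u1 u2 = (- (bform Q w w' + bform Q w w'))^-1 *:
      (- ((bform Q w w' + bform Q w w') *: wedge Q u1 u2)).
    by rewrite -scaleNr scalerA mulVf ?scale1r // oppr_eq0.
  exact: memvZ.
Qed.
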